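(* In the generic model, for $a\in\mathbb R$ let $\mathcal P_a:=\mathrm{ev}_a\circ\mathcal P\colon H_R\to\mathbb R$. Then for all $a,b\in\mathbb R$, $$\mathcal P_a\star\mathcal P_b=\mathcal P_{a+b},$$ i.e. $\sum_w\mathcal P(w_1)(a)\,\mathcal P(w_2)(b)=\mathcal P(w)(a+b)$ for every $w\in H_R$.
   Context: Generic model: $f\colon[0,\infty)\to\mathbb R$ continuous with $f(\zeta)-c/\zeta=O(\zeta^{-1-\epsilon})$ at infinity; Mellin transform $F(z)=\int_0^\infty f(\zeta)\zeta^{-z}d\zeta$, meromorphic near $0$. $H_R$: Connes–Kreimer Hopf algebra of rooted trees with coproduct $\Delta w=\sum_w w_1\otimes w_2$ (determined by $\Delta\circ B_+=B_+\otimes\mathbb 1+(\mathrm{id}\otimes B_+)\circ\Delta$), antipode $S$. $\phi_s(w)=s^{-z|w|}\prod_{v}F(z|w_v|)$ multiplicative; $\phi_{R,s}=\phi_\mu^{\star-1}\star\phi_s$ for fixed $\mu>0$; $\mathcal P(w)\in\mathbb R[x]$ is the polynomial with $\lim_{z\to0}\phi_{R,s}(w)=\mathcal P(w)(\ln\frac s\mu)$. Convolution of functionals: $\alpha\star\beta=m\circ(\alpha\otimes\beta)\circ\Delta$. *)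

(* Defs.v *)
From Stdlib Require Import Reals Lra List.
Import ListNotations.
Open Scope R_scope.

Inductive tree : Type := Node : list tree -> tree.
(* Node ts = B_+(ts) *)
Definition forest := list tree.   (* a monomial t1 ... tn of H_R; [] = 1 *)

Fixpoint tsize (t : tree) : nat :=
  match t with
  | Node ts => S ((fix fs (l : list tree) : nat :=
                    match l with [] => 0%nat | u :: l' => (tsize u + fs l')%nat end) ts)
  end.

Definition fsize (w : forest) : nat := fold_right (fun t acc => (tsize t + acc)%nat) 0%nat w.

Fixpoint subtree_sizes (t : tree) : list nat :=
  match t with
  | Node ts => tsize t :: (fix g (l : list tree) : list nat :=
                             match l with [] => [] | u :: l' => subtree_sizes u ++ g l' end) ts
  end.

Definition fsubtree_sizes (w : forest) : list nat := flat_map subtree_sizes w.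

(** Coproduct, as a list (with multiplicity) of terms w1 ⊗ w2. *)
Definition prod_coprod (A B : list (forest * forest)) : list (forest * forest) :=
  flat_map (fun p => map (fun q => (fst p ++ fst q, snd p ++ snd q)) B) A.

(* Δ B_+(f) = B_+(f) ⊗ 1 + (id ⊗ B_+) Δ f,  Δ multiplicative, Δ 1 = 1 ⊗ 1 *)
Fixpoint coprod_tree (t : tree) : list (forest * forest) :=
  match t with
  | Node ts =>
      ([t], []) ::
      map (fun p => (fst p, [Node (snd p)]))
        ((fix g (l : list tree) : list (forest * forest) :=
            match l with
            | [] => [([], [])]
            | u :: l' => prod_coprod (coprod_tree u) (g l')
            end) ts)
  end.

Definition coprod (w : forest) : list (forest * forest) :=
  fold_right (fun t acc => prod_coprod (coprod_tree t) acc) [([], [])] w.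

Definition sumR (l : list R) : R := fold_right Rplus 0 l.
Definition prodR (l : list R) : R := fold_right Rmult 1 l.

Definition conv (alpha beta : forest -> R) (w : forest) : R :=
  sumR (map (fun p => alpha (fst p) * beta (snd p)) (coprod w)).

(** Convolution inverse α^{⋆-1} of a functional with α(1) = 1, defined by
    α^{⋆-1}(1) = 1 and Σ_(w) α^{⋆-1}(w1) α(w2) = 0 for w ≠ 1, i.e.
    α^{⋆-1}(w) = - Σ_{(w), w2 ≠ 1} α^{⋆-1}(w1) α(w2)   (|w1| < |w| there).
    Fuel = number of vertices, which suffices. *)
Fixpoint conv_inv_fuel (n : nat) (alpha : forest -> R) (w : forest) : R :=
  match w with
  | [] => 1
  | _ :: _ =>
      match n with
      | O => 0
      | S n' => - sumR (map (fun p => match snd p with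
                                     | [] => 0
                                     | _ :: _ => conv_inv_fuel n' alpha (fst p) * alpha (snd p)
                                     end) (coprod w))
      end
  end.

Definition conv_inv (alpha : forest -> R) (w : forest) : R :=
  conv_inv_fuel (fsize w) alpha w.

Definition phi (F : R -> R) (s z : R) (w : forest) : R :=
  Rpower s (- z * INR (fsize w)) * prodR (map (fun k => F (z * INR k)) (fsubtree_sizes w)).

Definition phiR (F : R -> R) (mu s z : R) (w : forest) : R :=
  conv (conv_inv (phi F mu z)) (phi F s z) w.

(** Real polynomials as coefficient lists (constant term first). *)
Definition peval (p : list R) (x : R) : R := fold_right (fun c acc => c + x * acc) 0 p.

Definition cont_nonneg (f : R -> R) : Prop :=
  forall x, 0 <= x -> forall eps, 0 < eps -> exists delta, 0 < delta /\
    forall y, 0 <= y -> Rabs (y - x) < delta -> Rabs (f y - f x) < eps.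

Definition improper_integral_0_inf (g : R -> R) (l : R) : Prop :=
  forall eps, 0 < eps -> exists delta M, 0 < delta /\ delta < M /\
    forall a b, 0 < a < delta -> M < b ->
      exists pr : Riemann_integrable g a b, Rabs (RiemannInt pr - l) < eps.

Definition is_mellin (f F : R -> R) : Prop :=
  forall z, 0 < z < 1 -> improper_integral_0_inf (fun x => f x * Rpower x (- z)) (F z).

Definition lim_0_right (g : R -> R) (l : R) : Prop :=
  forall eps, 0 < eps -> exists delta, 0 < delta /\
    forall z, 0 < z < delta -> Rabs (g z - l) < eps.

(* Main.v *)
Require Import Defs.
From Stdlib Require Import Reals List Lra Lia.
Import ListNotations.
Open Scope R_scope.

Definition Sm {A} (l : list A) (f : A -> R) : R := sumR (map f l).

Lemma Sm_nil {A} (f : A -> R) : Sm [] f = 0. Proof. reflexivity. Qed.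
Lemma Sm_cons {A} x l (f : A -> R) : Sm (x :: l) f = f x + Sm l f. Proof. reflexivity. Qed.
Lemma Sm_app {A} l1 l2 (f : A -> R) : Sm (l1 ++ l2) f = Sm l1 f + Sm l2 f.
Proof. induction l1; simpl. unfold Sm; simpl; ring. rewrite !Sm_cons, IHl1; ring. Qed.
Lemma Sm_ext {A} l (f g : A -> R) : (forall x, f x = g x) -> Sm l f = Sm l g.
Proof. intro H; induction l; auto. rewrite !Sm_cons, IHl, H; auto. Qed.
Lemma Sm_ext_in {A} l (f g : A -> R) : (forall x, In x l -> f x = g x) -> Sm l f = Sm l g.
Proof. intro H; induction l; auto. rewrite !Sm_cons, IHl, H; simpl; auto. intros; apply H; simpl; auto. Qed.
Lemma Sm_map {A B} (h : A -> B) l f : Sm (map h l) f = Sm l (fun x => f (h x)).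
Proof. induction l; auto. simpl map. rewrite !Sm_cons, IHl; auto. Qed.
Lemma Sm_flat_map {A B} (g : A -> list B) l f : Sm (flat_map g l) f = Sm l (fun x => Sm (g x) f).
Proof. induction l; auto. simpl flat_map. rewrite Sm_app, Sm_cons, IHl; auto. Qed.
Lemma Sm_plus {A} l (f g : A -> R) : Sm l (fun x => f x + g x) = Sm l f + Sm l g.
Proof. induction l. unfold Sm; simpl; ring. rewrite !Sm_cons, IHl; ring. Qed.
Lemma Sm_zero {A} (l : list A) : Sm l (fun _ => 0) = 0.
Proof. induction l; auto. rewrite Sm_cons, IHl; ring. Qed.
Lemma Sm_mult_r {A} l (f : A -> R) c : Sm l f * c = Sm l (fun x => f x * c).
Proof. induction l. unfold Sm; simpl; ring. rewrite !Sm_cons, <- IHl; ring. Qed.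
Lemma Sm_mult_l {A} l (f : A -> R) c : c * Sm l f = Sm l (fun x => c * f x).
Proof. induction l. unfold Sm; simpl; ring. rewrite !Sm_cons, <- IHl; ring. Qed.
Lemma Sm_swap {A B} (l : list A) (m : list B) f :
  Sm l (fun x => Sm m (fun y => f x y)) = Sm m (fun y => Sm l (fun x => f x y)).
Proof. induction l. rewrite Sm_nil, Sm_zero; auto.
  rewrite Sm_cons, IHl, <- Sm_plus. apply Sm_ext; intro; rewrite Sm_cons; auto. Qed.

Lemma Sm_prod A B f : Sm (prod_coprod A B) f =
  Sm A (fun p => Sm B (fun q => f (fst p ++ fst q, snd p ++ snd q))).
Proof. unfold prod_coprod. rewrite Sm_flat_map. apply Sm_ext; intro; rewrite Sm_map; auto. Qed.

Lemma coprod_tree_eq ts : coprod_tree (Node ts) =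
  ([Node ts], []) :: map (fun p => (fst p, [Node (snd p)])) (coprod ts).
Proof. reflexivity. Qed.

Lemma coprod_cons t v : coprod (t :: v) = prod_coprod (coprod_tree t) (coprod v).
Proof. reflexivity. Qed.

Lemma tsize_node ts : tsize (Node ts) = S (fsize ts).
Proof. reflexivity. Qed.

Lemma fsize_app u v : fsize (u ++ v) = (fsize u + fsize v)%nat.
Proof. induction u; simpl; auto. unfold fsize in *; simpl; rewrite IHu; lia. Qed.

Definition tree_ind2 (P : tree -> Prop) (H : forall ts, Forall P ts -> P (Node ts)) : forall t, P t :=
  fix F t := match t with Node ts => H ts ((fix G l := match l return Forall P l with
     [] => Forall_nil _ | u :: l' => Forall_cons _ (F u) (G l') end) ts) end.

Lemma Sm_coprod_nil (f : forest * forest -> R) : Sm (coprod []) f = f ([], []).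
Proof. simpl. unfold Sm; simpl; ring. Qed.

Lemma Sm_coprod_app u v f : Sm (coprod (u ++ v)) f =
  Sm (coprod u) (fun p => Sm (coprod v) (fun q => f (fst p ++ fst q, snd p ++ snd q))).
Proof.
  revert f; induction u as [|t u IH]; intro f.
  - rewrite Sm_coprod_nil. apply Sm_ext; intros [x y]; reflexivity.
  - change ((t :: u) ++ v) with (t :: (u ++ v)). rewrite !coprod_cons, !Sm_prod.
    apply Sm_ext; intro p. rewrite IH. apply Sm_ext; intro q. apply Sm_ext; intro r.
    simpl. rewrite !app_assoc; reflexivity.
Qed.

Lemma Sm_coprod_single t f : Sm (coprod [t]) f = Sm (coprod_tree t) f.
Proof. rewrite coprod_cons, Sm_prod. apply Sm_ext; intros [x y]. rewrite Sm_coprod_nil; simpl.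
  rewrite !app_nil_r; auto. Qed.

Definition eps (w : forest) : R := match w with [] => 1 | _ => 0 end.
Lemma eps_app x y : eps (x ++ y) = eps x * eps y.
Proof. destruct x; destruct y; simpl; ring. Qed.

Definition CA (D : list (forest * forest)) := forall F : forest -> forest -> forest -> R,
  Sm D (fun p => Sm (coprod (fst p)) (fun q => F (fst q) (snd q) (snd p))) =
  Sm D (fun p => Sm (coprod (snd p)) (fun q => F (fst p) (fst q) (snd q))).

Lemma CA_prod A B : CA A -> CA B -> CA (prod_coprod A B).
Proof.
  intros HA HB F. rewrite !Sm_prod.
  transitivity (Sm A (fun p => Sm (coprod (fst p)) (fun q => Sm B (fun p' =>
     Sm (coprod (fst p')) (fun q' => F (fst q ++ fst q') (snd q ++ snd q') (snd p ++ snd p')))))).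
  { apply Sm_ext; intro p. rewrite Sm_swap. apply Sm_ext; intro p'. simpl. rewrite Sm_coprod_app. auto. }
  rewrite (HA (fun x y z => Sm B (fun p' =>
     Sm (coprod (fst p')) (fun q' => F (x ++ fst q') (y ++ snd q') (z ++ snd p'))))).
  apply Sm_ext; intro p. simpl.
  transitivity (Sm (coprod (snd p)) (fun x => Sm B (fun p' =>
     Sm (coprod (snd p')) (fun q => F (fst p ++ fst p') (fst x ++ fst q) (snd x ++ snd q))))).
  { apply Sm_ext; intro x. apply (HB (fun y z w => F (fst p ++ y) (fst x ++ z) (snd x ++ w))). }
  rewrite Sm_swap. apply Sm_ext; intro p'. rewrite Sm_coprod_app. auto.
Qed.

Lemma CA_unit : CA (coprod []).
Proof. intro F. reflexivity. Qed.

Lemma CA_forest w : Forall (fun t => CA (coprod_tree t)) w -> CA (coprod w).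
Proof. induction 1. apply CA_unit. rewrite coprod_cons. apply CA_prod; auto. Qed.

Lemma CA_tree t : CA (coprod_tree t).
Proof.
  induction t as [ts H] using tree_ind2. apply CA_forest in H.
  intro F. rewrite coprod_tree_eq, !Sm_cons, !Sm_map. cbn [fst snd].
  rewrite Sm_coprod_single, coprod_tree_eq, Sm_cons, Sm_map, Sm_coprod_nil. cbn [fst snd].
  pose proof (H (fun x y z => F x y [Node z])) as E. cbn beta in E. unfold forest in *. rewrite E.
  rewrite Rplus_assoc.
  f_equal. rewrite <- Sm_plus. apply Sm_ext; intro p.
  rewrite Sm_coprod_single, coprod_tree_eq, Sm_cons, Sm_map. cbn [fst snd]. auto.
Qed.

Lemma coassoc w : CA (coprod w).
Proof. apply CA_forest. apply Forall_forall; intros; apply CA_tree. Qed.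

Definition LC (D : list (forest * forest)) (u : forest) := forall G : forest -> forest -> R,
  Sm D (fun p => eps (fst p) * G (fst p) (snd p)) = G [] u.
Lemma LC_prod A B u v : LC A u -> LC B v -> LC (prod_coprod A B) (u ++ v).
Proof.
  intros HA HB G. rewrite Sm_prod.
  transitivity (Sm A (fun p => eps (fst p) * G (fst p ++ []) (snd p ++ v))).
  { apply Sm_ext; intro p. rewrite <- (HB (fun x y => G (fst p ++ x) (snd p ++ y))), Sm_mult_l.
    apply Sm_ext; intro q. simpl. rewrite eps_app; ring. }
  apply (HA (fun x y => G (x ++ []) (y ++ v))).
Qed.
Lemma LC_forest w : Forall (fun t => LC (coprod_tree t) [t]) w -> LC (coprod w) w.
Proof. induction 1. intro G; rewrite Sm_coprod_nil; simpl; ring.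
  rewrite coprod_cons. apply (LC_prod _ _ [x] l); auto. Qed.
Lemma LC_tree t : LC (coprod_tree t) [t].
Proof.
  induction t as [ts H] using tree_ind2. apply LC_forest in H.
  intro G. rewrite coprod_tree_eq, Sm_cons, Sm_map. cbn [fst snd eps].
  pose proof (H (fun x y => G x [Node y])) as E. cbn beta in E. unfold forest in *. rewrite E. ring.
Qed.
Lemma left_counit w G : Sm (coprod w) (fun p => eps (fst p) * G (fst p) (snd p)) = G [] w.
Proof. apply LC_forest. apply Forall_forall; intros; apply LC_tree. Qed.

Definition RC (D : list (forest * forest)) (u : forest) := forall G : forest -> forest -> R,
  Sm D (fun p => G (fst p) (snd p) * eps (snd p)) = G u [].
Lemma RC_prod A B u v : RC A u -> RC B v -> RC (prod_coprod A B) (u ++ v).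
Proof.
  intros HA HB G. rewrite Sm_prod.
  transitivity (Sm A (fun p => G (fst p ++ v) (snd p ++ []) * eps (snd p))).
  { apply Sm_ext; intro p. rewrite <- (HB (fun x y => G (fst p ++ x) (snd p ++ y))), Sm_mult_r.
    apply Sm_ext; intro q. simpl. rewrite eps_app; ring. }
  apply (HA (fun x y => G (x ++ v) (y ++ []))).
Qed.
Lemma RC_tree t : RC (coprod_tree t) [t].
Proof.
  destruct t as [ts]. intro G. rewrite coprod_tree_eq, Sm_cons, Sm_map. simpl.
  rewrite (Sm_ext _ _ (fun _ => 0)), Sm_zero. ring. intro; simpl; ring.
Qed.
Lemma right_counit w G : Sm (coprod w) (fun p => G (fst p) (snd p) * eps (snd p)) = G w [].
Proof. revert G; induction w; intro G. rewrite Sm_coprod_nil; simpl; ring.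
  rewrite coprod_cons. apply (RC_prod _ _ [a] w). apply RC_tree. intro; auto. Qed.

Lemma In_prod p A B : In p (prod_coprod A B) ->
  exists a b, In a A /\ In b B /\ p = (fst a ++ fst b, snd a ++ snd b).
Proof. unfold prod_coprod. rewrite in_flat_map. intros [a [Ha Hp]].
  apply in_map_iff in Hp. destruct Hp as [b [<- Hb]]. eauto. Qed.

Definition SZ (D : list (forest * forest)) (n : nat) :=
  forall p, In p D -> (fsize (fst p) + fsize (snd p))%nat = n.
Lemma SZ_forest w : Forall (fun t => SZ (coprod_tree t) (tsize t)) w -> SZ (coprod w) (fsize w).
Proof. induction 1. intros p [<-|[]]; reflexivity.
  rewrite coprod_cons. intros p Hp. apply In_prod in Hp. destruct Hp as [a [b [Ha [Hb ->]]]].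
  simpl. rewrite !fsize_app. apply H in Ha. apply IHForall in Hb. unfold fsize at 5; simpl.
  fold (fsize l). lia. Qed.
Lemma SZ_tree t : SZ (coprod_tree t) (tsize t).
Proof.
  induction t as [ts H] using tree_ind2. apply SZ_forest in H.
  rewrite coprod_tree_eq. intros p [<-|Hp]. simpl. unfold fsize; simpl. lia.
  apply in_map_iff in Hp. destruct Hp as [q [<- Hq]]. apply H in Hq. cbn [fst snd].
  change (fsize [Node (snd q)]) with (tsize (Node (snd q)) + 0)%nat. rewrite !tsize_node. unfold forest in *. lia.
Qed.
Lemma coprod_size w p : In p (coprod w) -> (fsize (fst p) + fsize (snd p))%nat = fsize w.
Proof. apply SZ_forest. apply Forall_forall; intros; apply SZ_tree. Qed.

Lemma conv_Sm a b w : conv a b w = Sm (coprod w) (fun p => a (fst p) * b (snd p)).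
Proof. reflexivity. Qed.

Lemma conv_ext a a' b b' w : (forall x, a x = a' x) -> (forall x, b x = b' x) ->
  conv a b w = conv a' b' w.
Proof. intros. rewrite !conv_Sm. apply Sm_ext; intro; rewrite H, H0; auto. Qed.

Lemma conv_assoc a b c w : conv (conv a b) c w = conv a (conv b c) w.
Proof.
  rewrite !conv_Sm.
  transitivity (Sm (coprod w) (fun p => Sm (coprod (fst p)) (fun q => a (fst q) * b (snd q) * c (snd p)))).
  { apply Sm_ext; intro p. rewrite conv_Sm, Sm_mult_r. auto. }
  rewrite (coassoc w (fun x y z => a x * b y * c z)).
  apply Sm_ext; intro p. rewrite conv_Sm, Sm_mult_l. apply Sm_ext; intro; ring.
Qed.

Lemma conv_eps_l b w : conv eps b w = b w.
Proof. rewrite conv_Sm. apply (left_counit w (fun x y => b y)). Qed.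
Lemma conv_eps_r a w : conv a eps w = a w.
Proof. rewrite conv_Sm. apply (right_counit w (fun x y => a x)). Qed.

Definition theta (c : R) (g : forest -> R) (w : forest) : R := c ^ fsize w * g w.

Lemma conv_theta c a b w : conv (theta c a) (theta c b) w = theta c (conv a b) w.
Proof.
  unfold theta. rewrite !conv_Sm, Sm_mult_l. apply Sm_ext_in; intros p Hp.
  apply coprod_size in Hp. rewrite <- Hp, pow_add. ring.
Qed.

Lemma theta_eps c w : theta c eps w = eps w.
Proof. unfold theta; destruct w; simpl. ring. ring. Qed.

Lemma Sm_split w G : Sm (coprod w) G = G (w, []) + Sm (coprod w) (fun p => G p * (1 - eps (snd p))).
Proof.
  pose proof (right_counit w (fun x y => G (x, y))) as E. cbn beta in E. unfold forest in *. rewrite <- E, <- Sm_plus.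
  apply Sm_ext; intros [x y]; simpl; ring.
Qed.

Lemma fsize_pos w : w <> [] -> (1 <= fsize w)%nat.
Proof. destruct w as [|[ts] w]. congruence. intros _. unfold fsize; simpl. lia. Qed.

Lemma lt_fst w p : In p (coprod w) -> snd p <> [] -> (fsize (fst p) < fsize w)%nat.
Proof. intros H1 H2. apply coprod_size in H1. apply fsize_pos in H2. lia. Qed.

Lemma uniq_unit a g : a [] = 1 -> (forall w, conv g a w = a w) -> forall w, g w = eps w.
Proof.
  intros Ha Hg.
  assert (forall n w, (fsize w <= n)%nat -> g w = eps w).
  2: { intro w; apply (H (fsize w)); auto. }
  induction n; intros w Hw.
  - destruct w. 2: { pose proof (fsize_pos (t :: w) ltac:(congruence)). lia. }
    specialize (Hg []). rewrite conv_Sm, Sm_coprod_nil in Hg. simpl in *. rewrite Ha in Hg. lra.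
  - destruct w as [|t w].
    + specialize (Hg []). rewrite conv_Sm, Sm_coprod_nil in Hg. simpl in *. rewrite Ha in Hg. lra.
    + specialize (Hg (t :: w)). rewrite conv_Sm, Sm_split in Hg. cbn [fst snd] in Hg.
      rewrite Ha in Hg.
      rewrite (Sm_ext_in _ _ (fun p => eps (fst p) * (a (snd p) * (1 - eps (snd p))))) in Hg.
      * pose proof (left_counit (t :: w) (fun x y => a y * (1 - eps y))) as E. cbn beta in E.
        unfold forest in *. rewrite E in Hg. simpl in *. lra.
      * intros [p1 p2] Hp. destruct p2 as [|t0 l]; cbn [fst snd eps]. ring.
        rewrite IHn. ring. pose proof (lt_fst _ (p1, t0 :: l) Hp ltac:(simpl; congruence)). simpl in *; lia.
Qed.

Lemma right_inv a l : a [] = 1 -> (forall w, conv l a w = eps w) -> forall w, conv a l w = eps w.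
Proof.
  intros Ha Hl. apply (uniq_unit a); auto. intro w.
  rewrite conv_assoc. rewrite (conv_ext a a (conv l a) eps); auto. apply conv_eps_r.
Qed.

Lemma fuel_indep a : forall n m w, (fsize w <= n)%nat -> (fsize w <= m)%nat ->
  conv_inv_fuel n a w = conv_inv_fuel m a w.
Proof.
  induction n; intros m w Hn Hm.
  - destruct w. destruct m; reflexivity. pose proof (fsize_pos (t :: w) ltac:(congruence)). lia.
  - destruct w as [|t w]. destruct m; reflexivity.
    destruct m. pose proof (fsize_pos (t :: w) ltac:(congruence)). lia.
    simpl. f_equal. apply (Sm_ext_in (coprod (t :: w))). intros [p1 p2] Hp.
    destruct p2 as [|t0 l]; cbn [fst snd]. auto.
    pose proof (lt_fst _ (p1, t0 :: l) Hp ltac:(simpl; congruence)). simpl in *.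
    f_equal. apply IHn; lia.
Qed.

Lemma conv_inv_left a : a [] = 1 -> forall w, conv (conv_inv a) a w = eps w.
Proof.
  intros Ha w. destruct w as [|t w].
  - rewrite conv_Sm, Sm_coprod_nil. simpl. rewrite Ha. unfold conv_inv. simpl. ring.
  - rewrite conv_Sm, Sm_split. cbn [fst snd]. rewrite Ha.
    unfold conv_inv at 1. remember (fsize (t :: w)) as N. destruct N.
    { pose proof (fsize_pos (t :: w) ltac:(congruence)). lia. }
    cbn [conv_inv_fuel]. simpl eps.
    match goal with |- - ?X * 1 + ?Y = 0 => assert (X = Y) as ->; [|ring] end.
    apply Sm_ext_in. intros [p1 p2] Hp. destruct p2 as [|t0 l]; cbn [fst snd eps]. ring.
    pose proof (lt_fst _ (p1, t0 :: l) Hp ltac:(simpl; congruence)). simpl in *.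
    unfold conv_inv. rewrite (fuel_indep a N (fsize p1)). ring. lia. lia.
Qed.

Lemma theta_theta ca cb g x : theta ca (theta cb g) x = theta (ca * cb) g x.
Proof. unfold theta. rewrite Rpow_mult_distr. ring. Qed.

Lemma key a ca cb w : a [] = 1 ->
  conv (conv_inv a) (theta (ca * cb) a) w =
  conv (conv (conv_inv a) (theta ca a)) (theta ca (conv (conv_inv a) (theta cb a))) w.
Proof.
  intro Ha. set (L := conv_inv a).
  assert (HL : forall w, conv L a w = eps w) by (apply conv_inv_left; auto).
  assert (Hri : forall x, conv (theta ca a) (theta ca L) x = eps x).
  { apply right_inv. unfold theta; simpl; rewrite Ha; ring.
    intro x. rewrite conv_theta. unfold theta at 1. rewrite HL. apply theta_eps. }
  transitivity (conv (conv L (theta ca a)) (conv (theta ca L) (theta (ca * cb) a)) w).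
  2: { apply conv_ext; intro x; auto. rewrite <- conv_theta. apply conv_ext; auto.
       intro; symmetry; apply theta_theta. }
  symmetry.
  rewrite conv_assoc. apply conv_ext; auto. intro x.
  rewrite <- conv_assoc. rewrite (conv_ext _ eps _ (theta (ca*cb) a)); auto.
  rewrite conv_eps_l; auto.
Qed.

Lemma exp_pow' x n : exp x ^ n = exp (INR n * x).
Proof. induction n. simpl. rewrite Rmult_0_l, exp_0; auto.
  rewrite S_INR, <- tech_pow_Rmult, IHn, <- exp_plus. f_equal; ring. Qed.

Lemma phi_scale F mu x z w : 0 < mu ->
  phi F (mu * exp x) z w = theta (exp (- z * x)) (phi F mu z) w.
Proof.
  intro Hmu. unfold phi, theta, Rpower. rewrite ln_mult, ln_exp; auto using exp_pos.
  rewrite exp_pow'. rewrite <- Rmult_assoc, <- exp_plus. f_equal. f_equal. ring.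
Qed.

Lemma phiR_scale F mu x z w : 0 < mu ->
  phiR F mu (mu * exp x) z w = conv (conv_inv (phi F mu z)) (theta (exp (- z * x)) (phi F mu z)) w.
Proof. intro. unfold phiR. apply conv_ext; auto. intro; apply phi_scale; auto. Qed.

Lemma phi_nil F mu z : phi F mu z [] = 1.
Proof. unfold phi, Rpower. simpl. rewrite Rmult_0_r, Rmult_0_l, exp_0. unfold prodR; simpl. ring. Qed.

Lemma decomp F mu a b z w : 0 < mu ->
  phiR F mu (mu * exp (a + b)) z w =
  Sm (coprod w) (fun p => phiR F mu (mu * exp a) z (fst p) *
      (exp (- z * a) ^ fsize (snd p) * phiR F mu (mu * exp b) z (snd p))).
Proof.
  intro Hmu. rewrite phiR_scale; auto.
  rewrite (conv_ext _ (conv_inv (phi F mu z)) _ (theta (exp (- z * a) * exp (- z * b)) (phi F mu z))); auto.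
  2: { intro y. unfold theta. rewrite <- exp_plus. f_equal. f_equal. f_equal. ring. }
  rewrite key by apply phi_nil. rewrite conv_Sm. apply Sm_ext; intro p.
  rewrite !phiR_scale; auto.
Qed.

Lemma lim_equiv g l : lim_0_right g l <-> limit1_in g (fun z => 0 < z) l 0.
Proof.
  unfold lim_0_right, limit1_in, limit_in; simpl; unfold R_dist. split.
  - intros H e He. destruct (H e He) as [d [Hd H']]. exists d; split; auto.
    intros x [Hx Hx']. apply H'. rewrite Rminus_0_r, Rabs_pos_eq in Hx'; lra.
  - intros H e He. destruct (H e He) as [d [Hd H']]. exists d; split; auto.
    intros x Hx. apply H'. rewrite Rminus_0_r, Rabs_pos_eq; lra.
Qed.

Lemma lim_plus f g l l' : lim_0_right f l -> lim_0_right g l' -> lim_0_right (fun z => f z + g z) (l + l').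
Proof. rewrite !lim_equiv. apply limit_plus. Qed.
Lemma lim_mult f g l l' : lim_0_right f l -> lim_0_right g l' -> lim_0_right (fun z => f z * g z) (l * l').
Proof. rewrite !lim_equiv. apply limit_mul. Qed.
Lemma lim_const c : lim_0_right (fun _ => c) c.
Proof. intros e He. exists 1. split. lra. intros. rewrite Rminus_diag, Rabs_R0; lra. Qed.

Lemma lim_Sm {A} (l : list A) (f : R -> A -> R) L :
  (forall p, In p l -> lim_0_right (fun z => f z p) (L p)) ->
  lim_0_right (fun z => Sm l (f z)) (Sm l L).
Proof.
  induction l; intro H. exact (lim_const 0).
  rewrite Sm_cons. apply (lim_plus (fun z => f z a) (fun z => Sm l (f z))).
  apply H; simpl; auto. apply IHl; intros; apply H; simpl; auto.
Qed.

Lemma lim_unique g l1 l2 : lim_0_right g l1 -> lim_0_right g l2 -> l1 = l2.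
Proof.
  intros H1 H2. destruct (Req_dec l1 l2) as [|Hne]; auto.
  assert (He : 0 < Rabs (l1 - l2) / 2). { assert (l1 - l2 <> 0) by lra. apply Rabs_pos_lt in H. lra. }
  - destruct (H1 _ He) as [d1 [Hd1 A1]]. destruct (H2 _ He) as [d2 [Hd2 A2]].
    set (z := Rmin d1 d2 / 2).
    assert (0 < z < d1) by (unfold z; pose proof (Rmin_l d1 d2); pose proof (Rmin_glb_lt d1 d2 0); lra).
    assert (0 < z < d2) by (unfold z; pose proof (Rmin_r d1 d2); pose proof (Rmin_glb_lt d1 d2 0); lra).
    specialize (A1 z H). specialize (A2 z H0).
    pose proof (Rabs_triang (l1 - g z) (g z - l2)).
    replace (l1 - g z + (g z - l2)) with (l1 - l2) in H3 by ring.
    rewrite Rabs_minus_sym in A1. lra.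
Qed.

Lemma lim_exp_pow a n : lim_0_right (fun z => exp (- z * a) ^ n) 1.
Proof.
  assert (C : continuity_pt (fun z => exp (- z * a) ^ n) 0) by reg.
  replace 1 with (exp (- 0 * a) ^ n) by (rewrite Ropp_0, Rmult_0_l, exp_0, pow1; auto).
  intros e He. destruct (C e He) as [d [Hd H]]. exists d; split; auto.
  intros z Hz. apply (H z). unfold D_x, no_cond; simpl; unfold R_dist. split. split; auto; lra.
  rewrite Rminus_0_r, Rabs_pos_eq; lra.
Qed.

Lemma lim_ext f g l : (forall z, f z = g z) -> lim_0_right f l -> lim_0_right g l.
Proof. intros E H e He. destruct (H e He) as [d [Hd H']]. exists d; split; auto.
  intros z Hz. rewrite <- E. auto. Qed.

Lemma ln_scale mu x : 0 < mu -> ln (mu * exp x / mu) = x.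
Proof. intro. replace (mu * exp x / mu) with (exp x) by (field; lra). apply ln_exp. Qed.

Theorem mainTheorem9 (f : R -> R) (c : R) (F : R -> R) (mu : R) (P : forest -> list R)
  (Hcont : cont_nonneg f)
  (Hdecay : exists eps K M, 0 < eps /\ 0 < M /\
     forall x, M <= x -> Rabs (f x - c / x) <= K * Rpower x (- 1 - eps))
  (HF : is_mellin f F)
  (Hmu : 0 < mu)
  (HP : forall (w : forest) (s : R), 0 < s ->
     lim_0_right (fun z => phiR F mu s z w) (peval (P w) (ln (s / mu)))) :
  forall (a b : R) (h : list (R * forest)),
    sumR (map (fun p => fst p * conv (fun w => peval (P w) a) (fun w => peval (P w) b) (snd p)) h)
    = sumR (map (fun p => fst p * peval (P (snd p)) (a + b)) h).
Proof.
  intros a b h.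
  assert (HPx : forall w x, lim_0_right (fun z => phiR F mu (mu * exp x) z w) (peval (P w) x)).
  { intros w x. pose proof (HP w (mu * exp x) ltac:(pose proof (exp_pos x); nra)) as H.
    rewrite ln_scale in H; auto. }
  assert (K : forall w, conv (fun w => peval (P w) a) (fun w => peval (P w) b) w = peval (P w) (a + b)).
  { intro w. apply (lim_unique (fun z => phiR F mu (mu * exp (a + b)) z w)); auto.
    apply (lim_ext (fun z => Sm (coprod w) (fun p => phiR F mu (mu * exp a) z (fst p) *
      (exp (- z * a) ^ fsize (snd p) * phiR F mu (mu * exp b) z (snd p))))).
    { intro z. symmetry. apply decomp; auto. }
    rewrite conv_Sm.
    replace (Sm (coprod w) (fun p => peval (P (fst p)) a * peval (P (snd p)) b))
      with (Sm (coprod w) (fun p => peval (P (fst p)) a * (1 * peval (P (snd p)) b)))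
      by (apply Sm_ext; intro; ring).
    apply lim_Sm. intros p _.
    apply (lim_mult (fun z => phiR F mu (mu * exp a) z (fst p))
                    (fun z => exp (- z * a) ^ fsize (snd p) * phiR F mu (mu * exp b) z (snd p))).
    apply HPx. apply (lim_mult (fun z => exp (- z * a) ^ fsize (snd p))). apply lim_exp_pow. apply HPx. }
  f_equal. apply map_ext. intros [x w]. cbn [fst snd]. rewrite K. auto.
Qed.
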